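(* Let $X$ be a discrete random variable and $U$ a continuously distributed random variable with $U\sim\mathrm{Unif}[0,1]$, and let $\mathcal{T}\subseteq\mathbb{R}$. Then $U$ is $\mathcal{T}$-independent of $X$ if and only if \[ \mathbb{E}\big(\Pr(X=x\mid U)\mid U\in(t_1,t_2)\big)=\Pr(X=x)\quad\text{for all }x\in\operatorname{supp}(X) \] for all $t_1,t_2\in\mathcal{T}\cup\{0,1\}$ with $t_1<t_2$.
   Context: $U$ is $\mathcal{T}$-independent of $X$ if $F_{U\mid X}(\tau\mid x)=F_U(\tau)$ for all $x\in\operatorname{supp}(X)$ and all $\tau\in\mathcal{T}$, where $F_{U\mid X}(\cdot\mid x)$ is the conditional cdf of $U$ given $X=x$ and $F_U$ the marginal cdf of $U$. *)

(* Defs.v *)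
From HB Require Import structures.
From mathcomp Require Import all_boot all_order all_algebra.
From mathcomp Require Import all_classical all_reals all_analysis.
Set Implicit Arguments. Unset Strict Implicit. Unset Printing Implicit Defensive.
Import Order.TTheory GRing.Theory Num.Theory.
Import numFieldNormedType.Exports.
Local Open Scope classical_set_scope.
Local Open Scope ring_scope.

Section Defs.
Context {d : measure_display} {T : measurableType d} {R : realType}.
Variable P : probability T R.

Definition discrete_rv (X : T -> R) : Prop :=
  measurable_fun setT X /\
  exists S : set R, countable S /\ measurable S /\ P (X @^-1` S) = 1%E.

Definition uniform01_rv (U : T -> R) : Prop :=
  measurable_fun setT U /\
  forall B : set R, measurable B ->
    P (U @^-1` B) = (@lebesgue_measure R) (B `&` `[0%R, 1%R]).

Definition supp (X : T -> R) : set R :=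
  [set x | (0 < P (X @^-1` [set x]))%E].

Definition cdf (U : T -> R) (tau : R) : R := fine (P (U @^-1` `]-oo, tau])).

Definition cond_cdf (U X : T -> R) (tau x : R) : R :=
  fine (P (U @^-1` `]-oo, tau] `&` X @^-1` [set x])) /
  fine (P (X @^-1` [set x])).

Definition T_independent (Tset : set R) (U X : T -> R) : Prop :=
  forall x tau, supp X x -> Tset tau -> cond_cdf U X tau x = cdf U tau.

(* g is a version of the conditional probability Pr(X = x | U), i.e.
   g(U) = E[1{X = x} | sigma(U)] a.s.: g is Borel, g(U) is integrable and
   E[g(U) 1{U in B}] = Pr(X = x, U in B) for every Borel B. *)
Definition cond_prob_version (X U : T -> R) (x : R) (g : R -> R) : Prop :=
  measurable_fun setT g /\
  P.-integrable setT (fun w => (g (U w))%:E) /\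
  forall B : set R, measurable B ->
    (\int[P]_(w in U @^-1` B) (g (U w))%:E)%E =
    P (U @^-1` B `&` X @^-1` [set x]).

Definition cexp_event (Y : T -> R) (A : set T) : R :=
  (\int[P]_(w in A) Y w) / fine (P A).

End Defs.

(* Main.v *)
Require Import Defs.
From HB Require Import structures.
From mathcomp Require Import all_boot all_order all_algebra.
From mathcomp Require Import all_classical all_reals all_analysis.
From mathcomp Require Import measurable_realfun.
Import Order.TTheory GRing.Theory Num.Theory.
Import numFieldNormedType.Exports.
Local Open Scope classical_set_scope.
Local Open Scope ring_scope.

Lemma version_exists (d : measure_display) (T : measurableType d) (R : realType)
  (P : probability T R) (X U : T -> R) (x : R)
  (mU : measurable_fun setT U) (mA : measurable (X @^-1` [set x])) :
  exists g, cond_prob_version P X U x g.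
Proof.
pose mf_mixin := isMeasurableFun.Build _ _ _ _ _ mU.
pose Up : {mfun T >-> R} := MeasurableFun.Pack (MeasurableFun.Class mf_mixin).
pose mu : {sigma_finite_measure set R -> \bar R} := distribution P Up.
pose nu : {charge set R -> \bar R} :=
  measure_function_pushforward__canonical__charge_Charge
    (crestr (charge_of_finite_measure P) mA) mU.
have numu : nu `<< mu.
  move=> B PB A mA0 AB.
  have PA := PB A mA0 AB.
  rewrite /nu /= /pushforward /crestr /=.
  apply/eqP; rewrite eq_le measure_ge0 ?andbT.
  rewrite /mu /distribution /pushforward in PA.
  rewrite -PA; apply: le_measure; rewrite ?inE //.
  - apply: measurableI => //; rewrite -[_ @^-1` _]setTI; exact: (mU _ _ _).
  - rewrite -[_ @^-1` _]setTI; exact: (mU _ _ _).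
pose f := Radon_Nikodym nu mu.
have ffin := Radon_Nikodym_fin_num (nu:=nu) (mu:=mu) ^~ numu.
have fint : mu.-integrable setT f := Radon_Nikodym_integrable numu.
have fE := Radon_Nikodym_integral numu.
have mf := measurable_int _ fint.
have fgE : forall y, ((fine \o f) y)%:E = f y by move=> y /=; rewrite fineK.
exists (fine \o f); split.
  apply/measurable_EFinP; rewrite (_ : _ \o _ = f) //; by apply: funext => y /=; rewrite fineK.
split.
  apply/integrableP; split.
    apply: measurableT_comp => //; apply: measurableT_comp => //.
    exact: (measurableT_comp (measurable_realfun.fine_measurable measurableT) mf).
  under eq_integral do rewrite fgE.
  have := integrableP _ _ _ fint => -[_].
  rewrite /mu /distribution ge0_integral_pushforward //.
  by apply: measurableT_comp.
move=> B mB.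
under eq_integral do rewrite fgE.
have -> : (\int[P]_(w in U @^-1` B) f (U w) = \int[P]_(w in U @^-1` B) (f \o U) w)%E by [].
rewrite -(integral_pushforward (mu:=P) mU mf) //.
  change (pushforward P U) with (mu : set R -> \bar R).
  by rewrite -fE.
apply/integrableP; split.
  by apply: measurableT_comp => //; exact: measurable_funTS.
have := integrableP _ _ _ fint => -[_].
rewrite /mu /distribution ge0_integral_pushforward //; last by apply: measurableT_comp.
apply: le_lt_trans; apply: ge0_subset_integral => //.
- rewrite -[_ @^-1` _]setTI; exact: (mU _ _ _).
- by rewrite preimage_setT.
- apply: measurableT_comp => //; apply: measurableT_comp => //.
Qed.

Section Helpers.
Context (d : measure_display) (T : measurableType d) (R : realType)
  (P : probability T R) (U : T -> R).
Context (mU : measurable_fun setT U)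
  (hU : forall B : set R, measurable B ->
    P (U @^-1` B) = (@lebesgue_measure R) (B `&` `[0%R, 1%R])).

Lemma preU_meas (B : set R) : measurable B -> measurable (U @^-1` B).
Proof. by move=> mB; rewrite -[_ @^-1` _]setTI; exact: mU. Qed.

Lemma leb_sub1 (S : set R) (a : R) : measurable S -> S `<=` [set a] ->
  (@lebesgue_measure R) S = 0%E.
Proof.
move=> mS Sa; apply/eqP; rewrite eq_le measure_ge0 andbT.
by rewrite -(lebesgue_measure_set1 a); apply: le_measure; rewrite ?inE.
Qed.

Lemma null_inter (B : set R) (F : set T) : measurable B -> measurable F ->
  (@lebesgue_measure R) (B `&` `[0%R, 1%R]) = 0%E ->
  P (U @^-1` B `&` F) = 0%E.
Proof.
move=> mB mF h0; apply/eqP; rewrite eq_le measure_ge0 ?andbT.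
  rewrite -h0 -hU //; apply: le_measure; rewrite ?inE //.
  - by apply: measurableI => //; exact: preU_meas.
  - exact: preU_meas.
Qed.

Lemma swap_null (I J : set R) (F : set T) : measurable I -> measurable J ->
  measurable F -> I `<=` J ->
  (@lebesgue_measure R) ((J `\` I) `&` `[0%R, 1%R]) = 0%E ->
  P (U @^-1` J `&` F) = P (U @^-1` I `&` F).
Proof.
move=> mI mJ mF IJ h0.
have -> : U @^-1` J `&` F = (U @^-1` I `&` F) `|` (U @^-1` (J `\` I) `&` F).
  apply/seteqP; split => w /=.
    by move=> [Jw Fw]; have [Iw|Iw] := pselect (I (U w)); [left|right].
  by move=> [[Iw Fw]|[[Jw _] Fw]]; split => //; apply: IJ.
rewrite measureU //.
- have mJI : measurable (J `\` I) by exact: measurableD.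
  have h := null_inter _ _ mJI mF h0.
  rewrite [X in (_ + X)%E]h ?adde0 //.
- by apply: measurableI => //; exact: preU_meas.
- by apply: measurableI => //; apply: preU_meas; exact: measurableD.
- by apply/seteqP; split => w //= [[Iw _] [[_ nIw] _]].
Qed.

Lemma split_itv (t1 t2 : R) (F : set T) : t1 < t2 -> measurable F ->
  fine (P (U @^-1` `]t1, t2[ `&` F)) =
  fine (P (U @^-1` `]-oo, t2] `&` F)) - fine (P (U @^-1` `]-oo, t1] `&` F)).
Proof.
move=> t12 mF.
rewrite (@swap_null [set` `]-oo, t2[] [set` `]-oo, t2]] F) //; last 2 first.
- by move=> y /=; rewrite !in_itv /=; apply: ltW.
- apply: (@leb_sub1 _ t2).
    by apply: measurableI => //; apply: measurableD.
  move=> y /= [[]]; rewrite !in_itv /= => yt2 nyt2 _.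
  by apply/eqP; rewrite eq_le yt2 /= leNgt; apply/negP.
have -> : [set` `]-oo, t2[] = [set` `]-oo, t1]] `|` [set` `]t1, t2[].
  apply/seteqP; split => y /=; rewrite !in_itv /=.
    by move=> yt2; have [yt1|yt1] := leP y t1; [left|right].
  by move=> [yt1|/andP[_ ->]] //; apply: le_lt_trans t12.
rewrite preimage_setU setIUl measureU //.
- rewrite fineD ?fin_num_measure //; last 2 first.
  + by apply: measurableI => //; apply: preU_meas.
  + by apply: measurableI => //; apply: preU_meas.
  by rewrite addrAC subrr add0r.
- by apply: measurableI => //; apply: preU_meas.
- by apply: measurableI => //; apply: preU_meas.
- apply/seteqP; split => w //= [[]]; rewrite !in_itv /= => h1 _ [] /andP[h2 _].
  by move: h2; rewrite ltNge h1.
Qed.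


Lemma P_leneg (tau : R) (F : set T) : tau <= 0 -> measurable F ->
  P (U @^-1` `]-oo, tau] `&` F) = 0%E.
Proof.
move=> t0 mF; apply: null_inter => //.
apply: (@leb_sub1 _ 0).
  by apply: measurableI => //; exact: measurable_itv.
move=> y /= []; rewrite !in_itv /= => yt /andP[y0 _].
by apply/eqP; rewrite eq_le y0 (le_trans yt t0).
Qed.

Lemma P_le1 (F : set T) : measurable F ->
  P (U @^-1` `]-oo, 1] `&` F) = P F.
Proof.
move=> mF.
rewrite -(@swap_null [set` `]-oo, 1]] setT F) //.
- by rewrite preimage_setT setTI.
- apply: (@leb_sub1 _ 0).
    by apply: measurableI => //; apply: measurableD.
  move=> y /= [[_]]; rewrite !in_itv /= => ny1 /andP[_ y1].
  by exfalso; apply: ny1.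
Qed.

Lemma P_pos (tau : R) : 0 < tau -> (0 < P (U @^-1` `]0%R, tau[))%E.
Proof.
move=> t0; rewrite hU //.
apply: (@lt_le_trans _ _ ((@lebesgue_measure R) [set` `]0, (Num.min tau 1)[])).
  rewrite lebesgue_measure_itv /= lte_fin lt_min t0 ltr01 /=.
  by rewrite sube0 lte_fin lt_min t0 ltr01.
apply: le_measure; rewrite ?inE //.
- by apply: measurableI => //; exact: measurable_itv.
- move=> y /=; rewrite !in_itv /= lt_min => /andP[y0 /andP[yt y1]].
  by rewrite y0 yt (ltW y0) (ltW y1).
Qed.

End Helpers.

Theorem theorem3 (d : measure_display) (T : measurableType d) (R : realType)
  (P : probability T R) (X U : T -> R) (Tset : set R) :
  discrete_rv P X -> uniform01_rv P U ->
  (T_independent P Tset U X <->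
   forall t1 t2 : R,
     (Tset `|` [set 0; 1]) t1 -> (Tset `|` [set 0; 1]) t2 -> t1 < t2 ->
     (0 < P (U @^-1` `]t1, t2[))%E ->
     forall x : R, supp P X x ->
     forall g : R -> R, cond_prob_version P X U x g ->
       cexp_event P (fun w => g (U w)) (U @^-1` `]t1, t2[) =
       fine (P (X @^-1` [set x]))).
Proof.
move=> [mX _] [mU hU].
have mA : forall x, measurable (X @^-1` [set x]).
  by move=> x; rewrite -[_ @^-1` _]setTI; apply: mX.
have pxpos : forall x, supp P X x -> 0 < fine (P (X @^-1` [set x])).
  move=> x sx; apply: fine_gt0; rewrite sx /=.
  by apply: (le_lt_trans (probability_le1 _ _)); rewrite ?ltry.
have cexpE : forall t1 t2 x g, cond_prob_version P X U x g ->
    cexp_event P (fun w => g (U w)) (U @^-1` `]t1, t2[) =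
    fine (P (U @^-1` `]t1, t2[ `&` X @^-1` [set x])) /
    fine (P (U @^-1` `]t1, t2[ `&` setT)).
  move=> t1 t2 x g [_ [_ hg]].
  by rewrite /cexp_event /Rintegral hg ?setIT //; exact: measurable_itv.
split.
- move=> H t1 t2 Ht1 Ht2 t12 Ppos x sx g hg.
  rewrite (cexpE _ _ _ _ hg) !split_itv //.
  have key : forall tau, (Tset `|` [set 0; 1]) tau ->
      fine (P (U @^-1` `]-oo, tau] `&` X @^-1` [set x])) =
      fine (P (X @^-1` [set x])) * fine (P (U @^-1` `]-oo, tau] `&` setT)).
    move=> tau [Tt|[->|->]].
    - have := H x tau sx Tt; rewrite /cond_cdf /Defs.cdf setIT => <-.
      by rewrite mulrC divfK // gt_eqF // pxpos.
    - by rewrite !P_leneg ?mulr0.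
    - by rewrite !P_le1 // probability_setT mulr1.
  rewrite (key _ Ht1) (key _ Ht2) -mulrBr mulfK //.
  rewrite -split_itv // setIT gt_eqF //; apply: fine_gt0; rewrite Ppos /=.
  by apply: (le_lt_trans (probability_le1 _ _)); rewrite ?ltry //; exact: preU_meas.
- move=> H x tau sx Tt.
  rewrite /cond_cdf /Defs.cdf.
  have [t0|t0] := leP tau 0.
    rewrite P_leneg // -[U @^-1` _]setIT P_leneg //.
    by rewrite mul0r.
  have [g hg] := @version_exists _ _ _ P X U x mU (mA x).
  have := H 0 tau (or_intror (or_introl erefl)) (or_introl Tt) t0 (@P_pos _ _ _ P U hU tau t0) x sx g hg.
  rewrite (cexpE _ _ _ _ hg) !split_itv // !(@P_leneg _ _ _ P U mU hU 0) // !subr0 setIT => h.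
  have G0 : fine (P (U @^-1` `]-oo, tau])) != 0.
    apply/eqP => G0; move: h; rewrite G0 invr0 mulr0 => h0.
    by move: (pxpos x sx); rewrite -h0 ltxx.
  set Fv := fine (P (U @^-1` `]-oo, tau] `&` X @^-1` [set x])) in h *.
  set Gv := fine (P (U @^-1` `]-oo, tau])) in h G0 *.
  have hF : Fv = fine (P (X @^-1` [set x])) * Gv by rewrite -h divfK.
  by rewrite hF mulrC mulKf // gt_eqF // pxpos.
Qed.
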